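(* If $L\subseteq\Sigma^*$ is a Boolean combination of bounded languages, then $L\in\mathcal{L}(\mathsf{FC})$ if and only if $L\in\mathcal{L}(\mathsf{FC}[\mathsf{REG}])$.
   Context: $\Sigma$ is a fixed finite alphabet. For $w \in \Sigma^*$, $\mathsf{Facs}(w)$ is the set of all factors of $w$. The structure $\mathfrak{A}_w$ representing $w$ has universe $\mathsf{Facs}(w)\cup\{\perp\}$, a ternary relation $R_\circ=\{(x,y,z)\in\mathsf{Facs}(w)^3 : x=y\cdot z\}$, for each letter a constant interpreted as that letter if it occurs in $w$ and as $\perp$ otherwise, and a constant $\varepsilon$ interpreted as the empty word. $\mathsf{FC}$ is first-order logic over such structures, with atomic formulas $(x \mathbin{\dot=} y\cdot z)$ (meaning $R_\circ(x,y,z)$) where $x,y,z$ are variables, letters of $\Sigma$, or $\varepsilon$, closed under $\land,\lor,\neg,\exists,\forall$; quantified variables range over $\mathsf{Facs}(w)$. $\mathsf{FC}[\mathsf{REG}]$ extends $\mathsf{FC}$ with atomic regular constraints $(x \mathbin{\dot\in}\gamma)$, $\gamma$ a regular expression, which hold under an assignment $\sigma$ in $\mathfrak{A}_w$ iff $\sigma(x)$ is a factor of $w$ and $\sigma(x)\in\mathcal{L}(\gamma)$. For a sentence $\varphi$, $\mathcal{L}(\varphi)=\{w\in\Sigma^*:\mathfrak{A}_w\models\varphi\}$; $\mathcal{L}(\mathsf{FC})$ and $\mathcal{L}(\mathsf{FC}[\mathsf{REG}])$ are the classes of languages defined by sentences of the respective logics. A language $L\subseteq\Sigma^*$ is bounded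 if $L\subseteq w_1^*w_2^*\cdots w_n^*$ for some $n\in\mathbb{N}$ and $w_1,\dots,w_n\in\Sigma^*$. *)

(* Defs.v *)
From mathcomp Require Import all_boot.
Set Implicit Arguments. Unset Strict Implicit. Unset Printing Implicit Defensive.

Section FC.
Variable Sigma : finType.

Definition word := seq Sigma.
Definition language := word -> Prop.

Inductive regex : Type :=
| RE_empty : regex
| RE_eps : regex
| RE_char : Sigma -> regex
| RE_union : regex -> regex -> regex
| RE_cat : regex -> regex -> regex
| RE_star : regex -> regex.

Inductive re_lang : regex -> word -> Prop :=
| rl_eps : re_lang RE_eps [::]
| rl_char a : re_lang (RE_char a) [:: a]
| rl_unionl r s w : re_lang r w -> re_lang (RE_union r s) w
| rl_unionr r s w : re_lang s w -> re_lang (RE_union r s) w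
| rl_cat r s u v : re_lang r u -> re_lang s v -> re_lang (RE_cat r s) (u ++ v)
| rl_star0 r : re_lang (RE_star r) [::]
| rl_starS r u v : re_lang r u -> re_lang (RE_star r) v -> re_lang (RE_star r) (u ++ v).

Inductive term : Type :=
| TVar : nat -> term
| TLet : Sigma -> term
| TEps : term.

Inductive formula : Type :=
| FEq : term -> term -> term -> formula
| FReg : nat -> regex -> formula
| FNot : formula -> formula
| FAnd : formula -> formula -> formula
| FOr : formula -> formula -> formula
| FEx : nat -> formula -> formula
| FAll : nat -> formula -> formula.

Fixpoint is_FC (phi : formula) : bool :=
  match phi with
  | FEq _ _ _ => true
  | FReg _ _ => false
  | FNot p => is_FC p
  | FAnd p q | FOr p q => is_FC p && is_FC q
  | FEx _ p | FAll _ p => is_FC p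
  end.

Definition term_fv (t : term) : seq nat :=
  if t is TVar n then [:: n] else [::].

Fixpoint fv (phi : formula) : seq nat :=
  match phi with
  | FEq x y z => term_fv x ++ term_fv y ++ term_fv z
  | FReg x _ => [:: x]
  | FNot p => fv p
  | FAnd p q | FOr p q => fv p ++ fv q
  | FEx n p | FAll n p => filter (fun m => m != n) (fv p)
  end.

Definition sentence (phi : formula) : Prop := fv phi = [::].

Definition is_factor (w u : word) : bool := infix u w.

(* interpretation of a term in A_w under sigma; None stands for \perp *)
Definition term_eval (w : word) (sigma : nat -> word) (t : term) : option word :=
  match t with
  | TVar n => Some (sigma n)
  | TLet a => if a \in w then Some [:: a] else None
  | TEps => Some [::]
  end.

Definition upd (sigma : nat -> word) (n : nat) (u : word) : nat -> word :=
  fun m => if m == n then u else sigma m.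

Fixpoint sat (w : word) (sigma : nat -> word) (phi : formula) : Prop :=
  match phi with
  | FEq x y z =>
      exists X Y Z, [/\ term_eval w sigma x = Some X,
                        term_eval w sigma y = Some Y,
                        term_eval w sigma z = Some Z &
                        [/\ is_factor w X, is_factor w Y, is_factor w Z &
                            X = Y ++ Z]]
  | FReg x g => is_factor w (sigma x) /\ re_lang g (sigma x)
  | FNot p => ~ sat w sigma p
  | FAnd p q => sat w sigma p /\ sat w sigma q
  | FOr p q => sat w sigma p \/ sat w sigma q
  | FEx n p => exists u, is_factor w u /\ sat w (upd sigma n u) p
  | FAll n p => forall u, is_factor w u -> sat w (upd sigma n u) p
  end.

(* For a sentence the assignment is irrelevant; we use the assignment
   sending every variable to the empty word (a factor of every w). *)
Definition models (w : word) (phi : formula) : Prop := sat w (fun _ => [::]) phi.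

Definition FC_definable (L : language) : Prop :=
  exists phi, [/\ sentence phi, is_FC phi & forall w, L w <-> models w phi].

Definition FCREG_definable (L : language) : Prop :=
  exists phi, sentence phi /\ forall w, L w <-> models w phi.

Fixpoint in_star_prod (ws : seq word) (w : word) : Prop :=
  match ws with
  | [::] => w = [::]
  | wi :: ws' => exists k v, w = flatten (nseq k wi) ++ v /\ in_star_prod ws' v
  end.

Definition bounded (L : language) : Prop :=
  exists ws : seq word, forall w, L w -> in_star_prod ws w.

Inductive bool_comb_bounded : language -> Prop :=
| bcb_base L : bounded L -> bool_comb_bounded L
| bcb_compl L : bool_comb_bounded L -> bool_comb_bounded (fun w => ~ L w)
| bcb_union L1 L2 : bool_comb_bounded L1 -> bool_comb_bounded L2 ->
    bool_comb_bounded (fun w => L1 w \/ L2 w)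
| bcb_inter L1 L2 : bool_comb_bounded L1 -> bool_comb_bounded L2 ->
    bool_comb_bounded (fun w => L1 w /\ L2 w).

End FC.

(* Main.v *)
Require Import Defs.
From mathcomp Require Import all_boot zify.
From mathcomp Require Import boolp.
From Stdlib Require Import Classical.
Set Implicit Arguments. Unset Strict Implicit. Unset Printing Implicit Defensive.

Section Words.
Variable Sigma : finType.
Local Notation word := (word Sigma).

Definition pw (p : word) (k : nat) : word := flatten (nseq k p).

Lemma pw0 p : pw p 0 = [::]. Proof. by []. Qed.
Lemma pwS p k : pw p k.+1 = p ++ pw p k. Proof. by []. Qed.
Lemma pwD p a b : pw p (a + b) = pw p a ++ pw p b.
Proof. by elim: a => //= a IH; rewrite addSn !pwS IH catA. Qed.
Lemma pwSr p k : pw p k.+1 = pw p k ++ p.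
Proof. by rewrite -addn1 pwD /pw /= cats0. Qed.
Lemma pwM p a b : pw (pw p a) b = pw p (a * b).
Proof. elim: b => [|b IH]; first by rewrite muln0. by rewrite pwS IH mulnS pwD. Qed.
Lemma size_pw p k : size (pw p k) = k * size p.
Proof. by elim: k => //= k IH; rewrite pwS size_cat IH mulSn. Qed.
Lemma pw1 p : pw p 1 = p. Proof. by rewrite /pw /= cats0. Qed.
Lemma pw_nil k : pw [::] k = [::]. Proof. by elim: k. Qed.

Lemma cat_split (a b c d : word) : a ++ b = c ++ d ->
  (exists m, c = a ++ m /\ b = m ++ d) \/ (exists m, a = c ++ m /\ d = m ++ b).
Proof.
elim: a c => [|x a IH] [|y c] /=.
- by move=> ->; left; exists [::].
- by move=> ->; left; exists (y :: c).
- by move=> <-; right; exists (x :: a).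
- case=> -> /IH [[m [-> ->]]|[m [-> ->]]]; [left|right]; by exists m.
Qed.

Lemma split3 (a b c x y : word) : a ++ b ++ c = x ++ y ->
  (exists c1, x = a ++ b ++ c1 /\ c = c1 ++ y) \/
  (exists a2, a = x ++ a2 /\ y = a2 ++ b ++ c) \/
  (exists b1 b2, x = a ++ b1 /\ b = b1 ++ b2 /\ y = b2 ++ c).
Proof.
rewrite catA => /cat_split [[m [-> ->]]|[m [E ->]]].
- by left; exists m; rewrite catA.
- move/esym: E => /cat_split [[m' [-> ->]]|[m' [-> ->]]].
  + by right; left; exists m'; rewrite catA.
  + by right; right; exists m', m.
Qed.

Lemma infix_catP (u v w : word) : infix (u ++ v) w -> infix u w /\ infix v w.
Proof. move=> h; split; [exact: catr_infix h|exact: catl_infix h]. Qed.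

Lemma infix_ex (u w : word) : infix u w <-> exists a b, w = a ++ u ++ b.
Proof. by split => [/infixP|?]; [|apply/infixP]. Qed.

Lemma comm_root_n : forall n (x y : word), size x + size y <= n -> x ++ y = y ++ x ->
  exists t i j, x = pw t i /\ y = pw t j.
Proof.
elim=> [|n IH] x y hs E.
  move: hs; rewrite leqn0 addn_eq0 !size_eq0 => /andP[/eqP-> /eqP->].
  by exists [::], 0, 0.
case: x hs E => [|a x'] hs E.
  by exists y, 0, 1; rewrite pw1.
case: y hs E => [|b y'] hs E.
  by exists (a :: x'), 1, 0; rewrite pw1.
move: (E) => /cat_split [[m [E1 E2]]|[m [E1 E2]]].
- have Em : (a :: x') ++ m = m ++ (a :: x') by rewrite -E1.
  have hm : size (a :: x') + size m <= n.
    by move: hs; rewrite E1 size_cat /=; lia.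
  have [t [i [j [Ex Emm]]]] := IH _ _ hm Em.
  by exists t, i, (i + j); rewrite E1 Ex Emm pwD.
- have Em : m ++ (b :: y') = (b :: y') ++ m by rewrite -E2.
  have hm : size m + size (b :: y') <= n.
    by move: hs; rewrite E1 size_cat /=; lia.
  have [t [i [j [Emm Ey]]]] := IH _ _ hm Em.
  by exists t, (j + i), j; rewrite E1 Ey Emm pwD.
Qed.

Lemma comm_root (x y : word) : x ++ y = y ++ x ->
  exists t i j, x = pw t i /\ y = pw t j.
Proof. exact: (@comm_root_n (size x + size y)). Qed.

Definition prim (p : word) := p <> [::] /\ forall q k, pw q k = p -> k = 1.

Lemma prim_comm (p z : word) : prim p -> p ++ z = z ++ p -> exists j, z = pw p j.
Proof.
move=> [hp hq] /comm_root [t [i [j [Ep Ez]]]].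
have hi := hq t i (esym Ep); rewrite Ez; move: Ep; rewrite hi pw1 => ->.
by exists j.
Qed.

Lemma prim_root_n : forall n (v : word), size v <= n -> v <> [::] ->
  exists q j, prim q /\ v = pw q j.
Proof.
elim=> [|n IH] v hs hv; first by case: v hs hv.
case: (classic (prim v)) => hp; first by exists v, 1; rewrite pw1.
have [q [k [hE hk]]] : exists q k, pw q k = v /\ k <> 1.
  apply: NNPP => hn; apply: hp; split => // q k E; apply: NNPP => hk.
  by apply: hn; exists q, k.
have hq : q <> [::] by move=> hq; apply: hv; rewrite -hE hq pw_nil.
have hk0 : k <> 0 by move=> hk0; apply: hv; rewrite -hE hk0.
have hsz : size q <= n.
  have := size_pw q k; rewrite hE => hsv.
  have : 0 < size q by case: q hq {hE hsv}.
  move: hs; rewrite hsv; nia.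
have [q' [j [hq' Eq]]] := IH q hsz hq.
by exists q', (j * k); rewrite -hE Eq pwM.
Qed.

Lemma prim_root (v : word) : v <> [::] -> exists q j, prim q /\ v = pw q j.
Proof. exact: (@prim_root_n (size v)). Qed.

End Words.

Section Fac.
Variable Sigma : finType.
Local Notation word := (word Sigma).

Fixpoint blocksK (ps : seq word) (ks : seq nat) : word :=
  match ps, ks with
  | p :: ps', k :: ks' => pw p k ++ blocksK ps' ks'
  | _, _ => [::]
  end.

Definition inF (ps : seq word) (s : word) :=
  s = [::] \/ exists p a b, p \in ps /\ p = a ++ s ++ b.

Lemma inF_cons p ps s : inF ps s -> inF (p :: ps) s.
Proof.
case=> [->|[q [a [b [hq E]]]]]; [by left|right].
by exists q, a, b; rewrite in_cons hq orbT.
Qed.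

Lemma inF_head p ps a s b : p = a ++ s ++ b -> inF (p :: ps) s.
Proof. by move=> E; right; exists p, a, b; rewrite mem_head. Qed.

Lemma blocksK0 ps : blocksK ps (nseq (size ps) 0) = [::].
Proof. by elim: ps. Qed.

Lemma nil3 (a u b : word) : a ++ u ++ b = [::] -> u = [::].
Proof. by case: a => //; case: u. Qed.
Lemma nil2 (u b : word) : u ++ b = [::] -> u = [::].
Proof. by case: u. Qed.

Lemma P1 p k (u b : word) : pw p k = u ++ b ->
  exists j t c, u = pw p j ++ t /\ p = t ++ c.
Proof.
elim: k u => [|k IH] u /=.
  by case: u => // /esym hb; exists 0, [::], p.
rewrite pwS => /cat_split [[m [-> E]]|[m [E _]]].
- have [j [t [c [-> Ep]]]] := IH _ E.
  by exists j.+1, t, c; rewrite pwS catA.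
- by exists 0, u, m.
Qed.

Lemma P2 p k (a u : word) : pw p k = a ++ u ->
  exists j s d, u = s ++ pw p j /\ p = d ++ s.
Proof.
elim: k a u => [|k IH] a u /=.
  by case: u; [exists 0, [::], p; rewrite cats0| move=> x u; case: a].
rewrite pwSr => /esym /cat_split [[m [E ->]]|[m [E1 E2]]].
- have [j [s [d [-> Ep]]]] := IH _ _ E.
  by exists j.+1, s, d; rewrite pwSr catA.
- by exists 0, u, m; rewrite cats0.
Qed.

Lemma P3 p k (a u b : word) : pw p k = a ++ u ++ b ->
  exists j s t, u = s ++ pw p j ++ t /\ inF [:: p] s /\ inF [:: p] t.
Proof.
elim: k a u b => [|k IH] a u b /=.
  move=> /esym /nil3 ->.
  by exists 0, [::], [::]; split => //; split; left.
rewrite pwS => /esym /cat_split [[m [Ep E]]|[m [Ea E]]]; last exact: (IH m u b E).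
- move/esym: E => /cat_split [[m' [Eu E']]|[m' [Em Eb]]].
  + have [j [t [c [Em' Ep']]]] := P1 E'.
    exists j, m, t; rewrite Eu Em' catA; split => //; split.
    * by apply: (@inF_head _ _ a _ [::]); rewrite cats0.
    * exact: (@inF_head _ _ [::] _ c).
  + exists 0, u, [::]; rewrite /= cats0; split => //; split; last by left.
    by apply: (@inF_head _ _ a _ m'); rewrite Ep Em.
Qed.

Lemma Pre ps (w : word) : in_star_prod ps w -> forall u b, w = u ++ b ->
  exists ks t, inF ps t /\ size ks = size ps /\ u = blocksK ps ks ++ t.
Proof.
elim: ps w => [|p ps IH] w /=.
  move=> -> u b /esym /nil2 ->.
  by exists [::], [::]; split => //; left.
move=> [k [v [-> Hv]]] u b /esym /cat_split [[m [E Eb]]|[m [Eu Ev]]].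
- have [j [t [c [Eu Ep]]]] := P1 E.
  exists (j :: nseq (size ps) 0), t; split.
    exact: (@inF_head _ _ [::] _ c).
  by rewrite /= size_nseq blocksK0 Eu cats0.
- have [ks [t [ht [hs E]]]] := IH _ Hv m b Ev.
  exists (k :: ks), t; split; first exact: inF_cons.
  by rewrite /= hs Eu E catA.
Qed.

Lemma Fac ps (w : word) : in_star_prod ps w -> forall a u b, w = a ++ u ++ b ->
  exists s t ks, inF ps s /\ inF ps t /\ size ks = size ps /\
    u = s ++ blocksK ps ks ++ t.
Proof.
elim: ps w => [|p ps IH] w /=.
  move=> -> a u b /esym /nil3 ->.
  by exists [::], [::], [::]; split; [left|split; [left|]].
move=> [k [v [-> Hv]]] a u b /esym /cat_split [[m [E Eb]]|[m [Ea Ev]]].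
- move/esym: Eb => /cat_split [[m' [Eu Ev]]|[m' [Em Eb]]].
  + have [j [s [d [Em Ep]]]] := P2 E.
    have [ks [t [ht [hk E']]]] := Pre Hv Ev.
    exists s, t, (j :: ks); do !split.
    * by apply: (@inF_head _ _ d _ [::]); rewrite cats0.
    * exact: inF_cons.
    * by rewrite /= hk.
    * by rewrite Eu Em E' !catA.
  + have [j [s [t [Eu [hs ht]]]]] := P3 (etrans E (f_equal _ Em)).
    exists s, t, (j :: nseq (size ps) 0).
    have hF : forall x, inF [:: p] x -> inF (p :: ps) x.
      move=> x [->|[q [a' [b' [hq Eq]]]]]; [by left|right].
      exists q, a', b'; split => //; move: hq; rewrite mem_seq1 => /eqP ->.
      exact: mem_head.
    do !split; try exact: hF; first by rewrite /= size_nseq.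
    by rewrite blocksK0 cats0 Eu.
- have [s [t [ks [hs [ht [hk E]]]]]] := IH _ Hv _ _ _ Ev.
  exists s, t, (0 :: ks); do !split; try exact: inF_cons.
  - by rewrite /= hk.
  - by rewrite E.
Qed.
End Fac.

Section Recog.
Variable Sigma : finType.
Local Notation word := (word Sigma).
Local Notation regex := (regex Sigma).
Local Notation re_lang := (@re_lang Sigma).

Lemma re_empty u : ~ re_lang (RE_empty Sigma) u.
Proof. by move=> h; inversion h. Qed.
Lemma re_eps u : re_lang (RE_eps Sigma) u <-> u = [::].
Proof. split=> [h|->]; [by inversion h|exact: rl_eps]. Qed.
Lemma re_char a u : re_lang (RE_char a) u <-> u = [:: a].
Proof. split=> [h|->]; [by inversion h|exact: rl_char]. Qed.
Lemma re_union r s u : re_lang (RE_union r s) u <-> re_lang r u \/ re_lang s u.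
Proof.
split=> [h|[h|h]]; [inversion h; by [left|right]|exact: rl_unionl|exact: rl_unionr].
Qed.
Lemma re_cat r s u : re_lang (RE_cat r s) u <->
  exists u1 u2, u = u1 ++ u2 /\ re_lang r u1 /\ re_lang s u2.
Proof.
split=> [h|[u1 [u2 [-> [h1 h2]]]]]; last exact: rl_cat.
by inversion h; exists u0, v.
Qed.

Lemma star_cat_gen g u : re_lang g u -> forall r, g = RE_star r ->
  forall v, re_lang (RE_star r) v -> re_lang (RE_star r) (u ++ v).
Proof.
elim=> // {g u}.
- move=> r0 u w hu _ hw IHw r [Er] v hv; rewrite -catA; subst r0.
  by apply: rl_starS => //; apply: IHw.
Qed.

Lemma star_cat r u v : re_lang (RE_star r) u -> re_lang (RE_star r) v ->
  re_lang (RE_star r) (u ++ v).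
Proof. by move=> h hv; apply: (star_cat_gen h erefl hv). Qed.

Lemma star_one r u : re_lang r u -> re_lang (RE_star r) u.
Proof. by move=> h; rewrite -[u]cats0; apply: rl_starS => //; apply: rl_star0. Qed.

Lemma star_nil r : re_lang (RE_star r) [::].
Proof. exact: rl_star0. Qed.

Lemma star_split_gen g u : re_lang g u -> forall r, g = RE_star r ->
  forall b1 b2, u = b1 ++ b2 ->
  (re_lang (RE_star r) b1 /\ re_lang (RE_star r) b2) \/
  exists be1 v1 v2 be2, [/\ b1 = be1 ++ v1, b2 = v2 ++ be2,
     re_lang (RE_star r) be1, re_lang (RE_star r) be2 & re_lang r (v1 ++ v2)].
Proof.
elim=> // {g u}.
- move=> r0 r [Er] b1 b2 E.
  have h1 : b1 = [::] by case: b1 E.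
  have h2 : b2 = [::] by move: E; rewrite h1.
  by left; rewrite h1 h2; split; apply: rl_star0.
- move=> r0 u w hu _ hw IHw r [Er] b1 b2; subst r0.
  move=> /cat_split [[m [Eb1 Ew]]|[m [Eu Eb2]]].
  + have := IHw r erefl _ _ Ew.
    case=> [[h1 h2]|[be1 [v1 [v2 [be2 [E1 E2 h1 h2 h3]]]]]].
    * left; split => //; rewrite Eb1; exact: rl_starS.
    * right; exists (u ++ be1), v1, v2, be2; split => //.
      - by rewrite Eb1 E1 catA.
      - exact: rl_starS.
  + right; exists [::], b1, m, w; split => //; [exact: rl_star0|by rewrite -Eu].
Qed.

Lemma star_split r b1 b2 : re_lang (RE_star r) (b1 ++ b2) ->
  (re_lang (RE_star r) b1 /\ re_lang (RE_star r) b2) \/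
  exists be1 v1 v2 be2, [/\ b1 = be1 ++ v1, b2 = v2 ++ be2,
     re_lang (RE_star r) be1, re_lang (RE_star r) be2 & re_lang r (v1 ++ v2)].
Proof. by move=> h; apply: (star_split_gen h erefl). Qed.
End Recog.

Section Recog2.
Variable Sigma : finType.
Local Notation word := (word Sigma).
Local Notation regex := (regex Sigma).
Local Notation re_lang := (@re_lang Sigma).

Record recog (K : word -> Prop) := Recog {
  rT : finType;
  rh : word -> rT;
  rop : rT -> rT -> rT;
  racc : pred rT;
  rhcat : forall x y, rh (x ++ y) = rop (rh x) (rh y);
  racc_ok : forall u, K u <-> racc (rh u) }.

Definition pset (T : finType) (P : T -> Prop) : {set T} := [set q | `[< P q >]].
Lemma in_pset (T : finType) (P : T -> Prop) q : q \in pset P <-> P q.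
Proof. by rewrite inE; split => /asboolP. Qed.

Lemma recog_empty : recog (re_lang (RE_empty Sigma)).
Proof.
refine (@Recog _ bool (fun _ => false) (fun _ _ => false) pred0 _ _) => //.
by move=> u; split => // /re_empty.
Defined.

Lemma recog_eps : recog (re_lang (RE_eps Sigma)).
Proof.
refine (@Recog _ bool (fun u => u == [::]) andb id _ _).
- by move=> [|x u] [|y v].
- by move=> u; rewrite re_eps; split => [->|/eqP].
Defined.

Lemma recog_char a : recog (re_lang (RE_char a)).
Proof.
pose h (u : word) : option bool :=
  if u is _ :: _ then Some (u == [:: a]) else None.
pose op (x y : option bool) :=
  match x, y with None, _ => y | _, None => x | _, _ => Some false end.
refine (@Recog _ _ h op (fun t => t == Some true) _ _).
- move=> [|x u] [|y v] //=; rewrite ?cats0 // /h /op.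
  by rewrite eqseq_cons; case: u => [|z u] /=; rewrite andbF.
- move=> u; rewrite re_char; split => [->|]; first by rewrite /h eqxx.
  by case: u => //= x u /eqP [/eqP].
Defined.

Lemma recog_union r s : recog (re_lang r) -> recog (re_lang s) ->
  recog (re_lang (RE_union r s)).
Proof.
move=> [T1 h1 op1 acc1 c1 k1] [T2 h2 op2 acc2 c2 k2].
refine (@Recog _ (T1 * T2)%type (fun u => (h1 u, h2 u))
  (fun x y => (op1 x.1 y.1, op2 x.2 y.2)) (fun t => acc1 t.1 || acc2 t.2) _ _).
- by move=> x y; rewrite c1 c2.
- by move=> u; rewrite re_union k1 k2 /=; split => [[]->|/orP[]]; rewrite ?orbT; auto.
Defined.

Lemma recog_cat r s : recog (re_lang r) -> recog (re_lang s) ->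
  recog (re_lang (RE_cat r s)).
Proof.
move=> [T1 h1 op1 acc1 c1 k1] [T2 h2 op2 acc2 c2 k2].
pose S (u : word) := pset (fun q : T1 * T2 =>
  exists u1 u2, u = u1 ++ u2 /\ q = (h1 u1, h2 u2)).
pose h u := (h1 u, h2 u, S u).
pose op (x y : T1 * T2 * {set T1 * T2}) :=
  (op1 x.1.1 y.1.1, op2 x.1.2 y.1.2,
   pset (fun q => (exists q', q' \in x.2 /\ q = (q'.1, op2 q'.2 y.1.2)) \/
                  (exists q', q' \in y.2 /\ q = (op1 x.1.1 q'.1, q'.2)))).
refine (@Recog _ _ h op (fun t => [exists q in t.2, acc1 q.1 && acc2 q.2]) _ _).
- move=> x y; rewrite /h /op /= c1 c2; congr (_, _, _).
  apply/setP => q; apply/idP/idP => /in_pset H; apply/in_pset.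
  + case: H => [u1 [u2 [/cat_split [[m [E1 E2]]|[m [E1 E2]]] ->]]].
    * right; exists (h1 m, h2 u2); split; last by rewrite E1 c1.
      by apply/in_pset; exists m, u2.
    * left; exists (h1 u1, h2 m); split; last by rewrite E2 c2.
      by apply/in_pset; exists u1, m.
  + case: H => [[q' [/in_pset [u1 [u2 [E ->]]] ->]]|[q' [/in_pset [u1 [u2 [E ->]]] ->]]].
    * by exists u1, (u2 ++ y); rewrite E catA c2.
    * by exists (x ++ u1), u2; rewrite E catA c1.
- move=> u; rewrite re_cat; split.
  + move=> [u1 [u2 [E [H1 H2]]]]; apply/existsP; exists (h1 u1, h2 u2).
    rewrite /h /=; apply/andP; split; first by apply/in_pset; exists u1, u2.
    by apply/andP; split; [apply/k1|apply/k2].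
  + move=> /existsP [q /andP [/in_pset [u1 [u2 [E ->]]] /andP [H1 H2]]].
    by exists u1, u2; split => //; split; [apply/k1|apply/k2].
Defined.
End Recog2.

Section StarRec.
Variable Sigma : finType.
Local Notation word := (word Sigma).
Local Notation regex := (regex Sigma).
Local Notation re_lang := (@re_lang Sigma).
Variable r : regex.
Variable T1 : finType.
Variable h1 : word -> T1.
Variable op1 : T1 -> T1 -> T1.
Variable acc1 : pred T1.
Hypothesis c1 : forall x y, h1 (x ++ y) = op1 (h1 x) (h1 y).
Hypothesis k1 : forall u, re_lang r u <-> acc1 (h1 u).
Local Notation star := (re_lang (RE_star r)).

Definition SS u := pset (fun s => exists a b, u = a ++ b /\ star b /\ s = h1 a).
Definition PS u := pset (fun t => exists b c, u = b ++ c /\ star b /\ t = h1 c).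
Definition II u := pset (fun q : T1 * T1 =>
  exists a b c, u = a ++ b ++ c /\ star b /\ q = (h1 a, h1 c)).

Lemma acc_cat c a : acc1 (op1 (h1 c) (h1 a)) <-> re_lang r (c ++ a).
Proof. by rewrite k1 c1. Qed.

Lemma A_cat x y : star (x ++ y) <-> (star x /\ star y) \/
  exists t t', t \in PS x /\ t' \in SS y /\ acc1 (op1 t t').
Proof.
split.
- move/star_split => [H|[be1 [v1 [v2 [be2 [E1 E2 h1' h2' h3]]]]]]; first by left.
  right; exists (h1 v1), (h1 v2); split; first by apply/in_pset; exists be1, v1.
  split; first by apply/in_pset; exists v2, be2.
  exact/acc_cat.
- case=> [[H1 H2]|[t [t' [/in_pset [b [c [Ex [Hb ->]]]] [/in_pset [a' [b' [Ey [Hb' ->]]]] /acc_cat Hr]]]]].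
  + exact: star_cat.
  + rewrite Ex Ey -catA (catA c) ; apply: star_cat => //.
    by apply: star_cat => //; exact: star_one.
Qed.

Lemma SS_cat x y s : s \in SS (x ++ y) <->
  (exists s', s' \in SS y /\ s = op1 (h1 x) s') \/ (s \in SS x /\ star y) \/
  (exists t t', (s, t) \in II x /\ t' \in SS y /\ acc1 (op1 t t')).
Proof.
split.
- move=> /in_pset [a [b [/cat_split [[m [E1 E2]]|[m [E1 E2]]] [Hb ->]]]].
  + by left; exists (h1 m); split; [apply/in_pset; exists m, b|rewrite E1 c1].
  + move: Hb; rewrite E2 => /star_split.
    case=> [[Hm Hy]|[be1 [v1 [v2 [be2 [F1 F2 H1 H2 H3]]]]]].
    * by right; left; split => //; apply/in_pset; exists a, m; rewrite E1.
    * right; right; exists (h1 v1), (h1 v2); split.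
        by apply/in_pset; exists a, be1, v1; rewrite E1 F1.
      split; last exact/acc_cat.
      by apply/in_pset; exists v2, be2.
- case=> [[s' [/in_pset [a [b [E [Hb ->]]]] ->]]|[[/in_pset [a [b [E [Hb ->]]]] Hy]|]].
  + by apply/in_pset; exists (x ++ a), b; rewrite E catA c1.
  + by apply/in_pset; exists a, (b ++ y); rewrite E -catA; split => //; split => //; apply: star_cat.
  + move=> [t [t' [/in_pset [a [b [c [E [Hb [-> ->]]]]]] [/in_pset [a' [b' [E' [Hb' ->]]]] /acc_cat Hr]]]].
    apply/in_pset; exists a, (b ++ (c ++ a') ++ b'); split.
      by rewrite E E' -!catA.
    split => //; apply: star_cat => //; apply: star_cat => //; exact: star_one.
Qed.

Lemma PS_cat x y t : t \in PS (x ++ y) <->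
  (exists t', t' \in PS x /\ t = op1 t' (h1 y)) \/ (t \in PS y /\ star x) \/
  (exists t0 s', t0 \in PS x /\ (s', t) \in II y /\ acc1 (op1 t0 s')).
Proof.
split.
- move=> /in_pset [b [c [/cat_split [[m [E1 E2]]|[m [E1 E2]]] [Hb ->]]]].
  + move: Hb; rewrite E1 => /star_split.
    case=> [[Hx Hm]|[be1 [v1 [v2 [be2 [F1 F2 H1 H2 H3]]]]]].
    * by right; left; split => //; apply/in_pset; exists m, c.
    * right; right; exists (h1 v1), (h1 v2); split.
        by apply/in_pset; exists be1, v1.
      split; last exact/acc_cat.
      by apply/in_pset; exists v2, be2, c; rewrite E2 F2 catA.
  + by left; exists (h1 m); split; [apply/in_pset; exists b, m|rewrite E2 c1].
- case=> [[t' [/in_pset [b [c [E [Hb ->]]]] ->]]|[[/in_pset [b [c [E [Hb ->]]]] Hx]|]].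
  + by apply/in_pset; exists b, (c ++ y); rewrite E -catA c1.
  + by apply/in_pset; exists (x ++ b), c; rewrite E catA; split => //; split => //; apply: star_cat.
  + move=> [t0 [s' [/in_pset [b [c0 [E [Hb ->]]]] [/in_pset [a' [b' [c [E' [Hb' [-> ->]]]]]] /acc_cat Hr]]]].
    apply/in_pset; exists (b ++ (c0 ++ a') ++ b'), c; split.
      by rewrite E E' -!catA.
    split => //; apply: star_cat => //; apply: star_cat => //; exact: star_one.
Qed.

Lemma II_cat x y s t : (s, t) \in II (x ++ y) <->
  (exists q', q' \in II x /\ (s, t) = (q'.1, op1 q'.2 (h1 y))) \/
  (exists q', q' \in II y /\ (s, t) = (op1 (h1 x) q'.1, q'.2)) \/
  (s \in SS x /\ t \in PS y) \/
  (exists t0 s', (s, t0) \in II x /\ (s', t) \in II y /\ acc1 (op1 t0 s')).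
Proof.
split.
- move=> /in_pset [a [b [c [/esym /split3 H [Hb E]]]]].
  case: H => [[cc [Ex Ec]]|[[a2 [Ea Ey]]|[b1 [b2 [Ex [Eb Ey]]]]]].
  + left; exists (h1 a, h1 cc); split; first by apply/in_pset; exists a, b, cc.
    by rewrite E Ec c1.
  + right; left; exists (h1 a2, h1 c); split; first by apply/in_pset; exists a2, b, c.
    by rewrite E Ea c1.
  + move: Hb; rewrite Eb => /star_split.
    case=> [[H1 H2]|[be1 [v1 [v2 [be2 [F1 F2 H1 H2 H3]]]]]]; case: E => -> ->.
    * right; right; left; split.
        by apply/in_pset; exists a, b1.
      by apply/in_pset; exists b2, c.
    * right; right; right; exists (h1 v1), (h1 v2); split.
        by apply/in_pset; exists a, be1, v1; rewrite Ex F1.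
      split; last exact/acc_cat.
      by apply/in_pset; exists v2, be2, c; rewrite Ey F2 catA.
- case=> [[q' [/in_pset [a [b [c [E [Hb ->]]]]] [-> ->]]]|
         [[q' [/in_pset [a [b [c [E [Hb ->]]]]] [-> ->]]]|[[/in_pset [a [b [E [Hb ->]]]] /in_pset [b' [c [E' [Hb' ->]]]]]|]]].
  + by apply/in_pset; exists a, b, (c ++ y); rewrite E -!catA c1.
  + by apply/in_pset; exists (x ++ a), b, c; rewrite E !catA c1.
  + apply/in_pset; exists a, (b ++ b'), c; rewrite E E' -!catA; split => //; split => //.
    exact: star_cat.
  + move=> [t0 [s' [/in_pset [a [b [c0 [E [Hb [-> ->]]]]]] [/in_pset [a' [b' [c [E' [Hb' [-> ->]]]]]] /acc_cat Hr]]]].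
    apply/in_pset; exists a, (b ++ (c0 ++ a') ++ b'), c; split.
      by rewrite E E' -!catA.
    split => //; apply: star_cat => //; apply: star_cat => //; exact: star_one.
Qed.
End StarRec.


Section RecogStar.
Variable Sigma : finType.
Local Notation word := (word Sigma).
Local Notation regex := (regex Sigma).
Local Notation re_lang := (@re_lang Sigma).

Lemma recog_star r : recog (re_lang r) -> recog (re_lang (RE_star r)).
Proof.
move=> [T1 h1 op1 acc1 c1 k1].
pose T := (T1 * bool * {set T1} * {set T1} * {set T1 * T1})%type.
pose h (u : word) : T := (h1 u, `[< re_lang (RE_star r) u >], SS r h1 u, PS r h1 u, II r h1 u).
pose op (X Y : T) : T :=
  match X, Y with (hx, ax, SSx, PSx, Ix), (hy, ay, SSy, PSy, Iy) =>
  (op1 hx hy,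
   `[< (ax /\ ay) \/ exists t t', t \in PSx /\ t' \in SSy /\ acc1 (op1 t t') >],
   pset (fun s => (exists s', s' \in SSy /\ s = op1 hx s') \/ (s \in SSx /\ ay) \/
      (exists t t', (s, t) \in Ix /\ t' \in SSy /\ acc1 (op1 t t'))),
   pset (fun t => (exists t', t' \in PSx /\ t = op1 t' hy) \/ (t \in PSy /\ ax) \/
      (exists t0 s', t0 \in PSx /\ (s', t) \in Iy /\ acc1 (op1 t0 s'))),
   pset (fun q => (exists q', q' \in Ix /\ q = (q'.1, op1 q'.2 hy)) \/
      (exists q', q' \in Iy /\ q = (op1 hx q'.1, q'.2)) \/
      (q.1 \in SSx /\ q.2 \in PSy) \/
      (exists t0 s', (q.1, t0) \in Ix /\ (s', q.2) \in Iy /\ acc1 (op1 t0 s'))))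
  end.
refine (@Recog _ _ _ h op (fun t => t.1.1.1.2) _ _).
- move=> x y; have HA := A_cat c1 k1 x y.
  have HS := SS_cat c1 k1 x y; have HP := PS_cat c1 k1 x y; have HI := II_cat c1 k1 x y.
  rewrite /h /op c1; congr (_, _, _, _, _).
  + apply/idP/idP => /asboolP H0; apply/asboolP.
      case: (iffLR HA H0) => [[H1 H2]|H]; [left; split; exact/asboolP|by right].
    apply: (iffRL HA).
    case: H0 => [[/asboolP H1 /asboolP H2]|H]; [by left|by right].
  + apply/setP => s; apply/idP/idP => [/(HS s) H|H].
      apply/in_pset; case: H => [H|[[H1 H2]|H]]; [by left|right;left|by right;right].
      by split => //; apply/asboolP.
    apply/(HS s); move/in_pset: H; case=> [H|[[H1 H2]|H]]; [by left|right;left|by right;right].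
    by split => //; apply/asboolP.
  + apply/setP => s; apply/idP/idP => [/(HP s) H|H].
      apply/in_pset; case: H => [H|[[H1 H2]|H]]; [by left|right;left|by right;right].
      by split => //; apply/asboolP.
    apply/(HP s); move/in_pset: H; case=> [H|[[H1 H2]|H]]; [by left|right;left|by right;right].
    by split => //; apply/asboolP.
  + apply/setP => [[s t]]; apply/idP/idP => [/(HI s t) H|H].
      by apply/in_pset.
    by apply/(HI s t); move/in_pset: H.
- by move=> u; rewrite /h /=; split => /asboolP.
Defined.

Lemma regex_recog (g : regex) : recog (re_lang g).
Proof.
elim: g.
- exact: recog_empty.
- exact: recog_eps.
- exact: recog_char.
- by move=> r Hr s Hs; apply: recog_union.
- by move=> r Hr s Hs; apply: recog_cat.
- by move=> r Hr; apply: recog_star.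
Qed.
End RecogStar.

Section Period.
Variable Sigma : finType.
Local Notation word := (word Sigma).

Lemma period1 (T : finType) (f : T -> T) (e : T) :
  exists N M, 0 < M /\ forall k, N <= k -> iter (k + M) f e = iter k f e.
Proof.
pose g (i : 'I_(#|T|.+1)) := iter i f e.
have hinj : ~ injective g.
  by move=> /leq_card; rewrite card_ord ltnn.
have [i [j [hne hij]]] : exists i j, i <> j /\ g i = g j.
  apply: NNPP => hn; apply: hinj => i j E; apply: NNPP => hne; apply: hn.
  by exists i, j.
have key : forall a b : nat, a < b -> iter a f e = iter b f e ->
   exists N M, 0 < M /\ forall k, N <= k -> iter (k + M) f e = iter k f e.
  move=> a b hab E; exists a, (b - a); split; first by rewrite subn_gt0.
  move=> k hk; have -> : k + (b - a) = (k - a) + b by lia.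
  by rewrite iterD -E -iterD subnK.
have : (val i < val j) \/ (val j < val i).
  case: (ltngtP (val i) (val j)) => h; [by left|by right|].
  by exfalso; apply: hne; apply: val_inj.
by case=> h; [apply: (key _ _ h hij)|apply: (key _ _ h (esym hij))].
Qed.

Lemma period_rec K (R : recog K) (p : word) :
  exists N M, 0 < M /\ forall k q, N <= k -> rh R (pw p (k + M * q)) = rh R (pw p k).
Proof.
have E : forall k, rh R (pw p k) = iter k (@rop _ _ R (rh R p)) (rh R [::]).
  by elim=> //= k IH; rewrite pwS (rhcat R) IH.
have [N [M [hM H]]] := period1 (@rop _ _ R (rh R p)) (rh R [::]).
exists N, M; split => // k q hk; rewrite !E.
elim: q => [|q IH]; first by rewrite muln0 addn0.
by rewrite mulnS addnCA addnC H ?IH //; lia.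
Qed.

Lemma period_list K (R : recog K) (ps : seq word) :
  exists N M, 0 < M /\ forall p, p \in ps -> forall k q, N <= k ->
    rh R (pw p (k + M * q)) = rh R (pw p k).
Proof.
elim: ps => [|p ps [N2 [M2 [hM2 H2]]]]; first by exists 0, 1.
have [N1 [M1 [hM1 H1]]] := period_rec R p.
exists (maxn N1 N2), (M1 * M2); split; first by rewrite muln_gt0 hM1.
move=> p'; rewrite in_cons => /orP [/eqP -> | hp] k q hk.
- by rewrite -mulnA H1 //; lia.
- by rewrite (mulnC M1) -mulnA H2 //; lia.
Qed.
End Period.

Section Gadgets.
Variable Sigma : finType.
Local Notation word := (word Sigma).
Local Notation formula := (formula Sigma).
Local Notation V n := (TVar Sigma n).
Local Notation E := (TEps Sigma).
Implicit Types (w : word) (sg : nat -> word).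

Lemma upd_same sg n u : upd sg n u n = u.
Proof. by rewrite /upd eqxx. Qed.
Lemma upd_other sg n u m : m != n -> upd sg n u m = sg m.
Proof. by rewrite /upd => /negbTE ->. Qed.

Ltac us := repeat (first [rewrite upd_same | rewrite upd_other; [|by lia]]).

Lemma sat_VVV w sg x y z : sat w sg (FEq (V x) (V y) (V z)) <->
  [/\ infix (sg x) w, infix (sg y) w, infix (sg z) w & sg x = sg y ++ sg z].
Proof.
split.
- by move=> [X [Y [Z [[<-] [<-] [<-] [h1 h2 h3 h4]]]]].
- by move=> [h1 h2 h3 h4]; exists (sg x), (sg y), (sg z).
Qed.

Lemma sat_VEE w sg y : sat w sg (FEq (V y) E E) <-> sg y = [::].
Proof.
split.
- by move=> [X [Y [Z [[<-] [<-] [<-] [h1 h2 h3 ->]]]]].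
- move=> h; exists [::], [::], [::]; rewrite /= h; split => //.
  by split => //; apply: infix0s.
Qed.

Lemma sat_VVE w sg x : sat w sg (FEq (V x) (V x) E) <-> infix (sg x) w.
Proof.
split.
- by move=> [X [Y [Z [[<-] _ _ [h1 _ _ _]]]]].
- move=> h; exists (sg x), (sg x), [::]; split => //.
  by split => //; [apply: infix0s|rewrite cats0].
Qed.

Lemma sat_True w sg : sat w sg (FEq E E E).
Proof. by exists [::], [::], [::]; split => //; split => //; apply: infix0s. Qed.

Lemma sat_VLV w sg y a n : sat w sg (FEq (V y) (TLet a) (V n)) <->
  infix (sg y) w /\ sg y = a :: sg n.
Proof.
split.
- move=> [X [Y [Z [E1 E2 E3 [h1 h2 h3 h4]]]]]; move: E1 E2 E3 h1 h4 => /= [<-].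
  by case: ifP => // _ [<-] [<-].
- move=> [h1 h2]; exists (sg y), [:: a], (sg n).
  have ha : a \in w by apply: (mem_infix h1); rewrite h2 mem_head.
  rewrite /= ha; split => //; split => //.
  + by apply: (catr_infix (s := sg n)); rewrite /= -h2.
  + by apply: (catl_infix (s := [:: a])); rewrite /= -h2.
Qed.

Fixpoint GW (y : nat) (c : word) (n : nat) : formula :=
  match c with
  | [::] => FEq (V y) E E
  | a :: c' => FEx n (FAnd (FEq (V y) (TLet a) (V n)) (GW n c' n.+1))
  end.

Lemma GW_spec w c : forall y n sg, y < n -> infix (sg y) w ->
  (sat w sg (GW y c n) <-> sg y = c).
Proof.
elim: c => [|a c IH] y n sg hy hw /=; first exact: sat_VEE.
split.
- move=> [u [hu [/sat_VLV [_ H1] H2]]].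
  move: H1; us => ->; congr (_ :: _).
  by move/(IH n n.+1 _ (ltnSn n)): H2; us => /(_ hu).
- move=> H; have hc : infix c w.
    by apply: (catl_infix (s := [:: a])); rewrite /= -H.
  exists c; split => //; split.
  + by apply/sat_VLV; us; split.
  + by apply/(IH n n.+1 _ (ltnSn n)); rewrite upd_same.
Qed.

Definition GStar (z : nat) (p : word) (n : nat) : formula :=
  FOr (FEq (V z) E E)
      (FEx n (FEx n.+1 (FAnd (GW n.+1 p n.+2)
         (FAnd (FEq (V z) (V n.+1) (V n)) (FEq (V z) (V n) (V n.+1)))))).

Lemma GStar_spec w z p n sg : z < n -> prim p -> infix (sg z) w ->
  (sat w sg (GStar z p n) <-> exists j, sg z = pw p j).
Proof.
move=> hz hp hw; split.
- case=> [/sat_VEE ->|]; first by exists 0.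
  move=> [u [hu [c [hc [HW [/sat_VVV [_ _ _ E1] /sat_VVV [_ _ _ E2]]]]]]].
  have hc' : infix (upd (upd sg n u) n.+1 c n.+1) w by rewrite upd_same.
  have := iffLR (GW_spec p (ltnSn n.+1) hc') HW; rewrite upd_same => Ec.
  move: E1 E2; us => E1 E2.
  have [j Ej] : exists j, u = pw p j.
    by apply: prim_comm => //; rewrite -Ec -E1 E2.
  by exists j.+1; rewrite E1 Ec Ej pwS.
- move=> [[|j] Ej]; first by left; apply/sat_VEE.
  have hp' : infix p w.
    by apply: (infix_trans _ hw); rewrite Ej pwS; apply: prefix_infix.
  have hj : infix (pw p j) w.
    by apply: (infix_trans _ hw); rewrite Ej pwSr; apply: prefix_infix.
  right; exists (pw p j); split => //; exists p; split => //.
  have hc' : infix (upd (upd sg n (pw p j)) n.+1 p n.+1) w by rewrite upd_same.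
  split; first by apply/(GW_spec p (ltnSn n.+1) hc'); rewrite upd_same.
  split; apply/sat_VVV; us; split => //;
    first [by rewrite Ej pwS | by rewrite Ej pwSr].
Qed.

Fixpoint GRep (v z M n : nat) : formula :=
  match M with
  | 0 => FEq (V v) E E
  | M'.+1 => FEx n (FAnd (FEq (V v) (V z) (V n)) (GRep n z M' n.+1))
  end.

Lemma GRep_spec w M : forall v z n sg, v < n -> z < n -> infix (sg v) w ->
  infix (sg z) w -> (sat w sg (GRep v z M n) <-> sg v = pw (sg z) M).
Proof.
elim: M => [|M IH] v z n sg hv hz hwv hwz /=; first exact: sat_VEE.
split.
- move=> [u [hu [/sat_VVV [_ _ _ E1] H]]].
  have hu' : infix (upd sg n u n) w by rewrite upd_same.
  have hz' : infix (upd sg n u z) w by us.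
  have := iffLR (IH n z n.+1 _ (ltnSn n) (ltn_trans hz (ltnSn n)) hu' hz') H.
  move: E1; us => -> ->; by rewrite pwS.
- move=> Ev; have hu : infix (pw (sg z) M) w.
    by apply: (infix_trans _ hwv); rewrite Ev pwS; apply: suffix_infix.
  exists (pw (sg z) M); split => //; split.
    by apply/sat_VVV; us; split => //; rewrite Ev pwS.
  have hu' : infix (upd sg n (pw (sg z) M) n) w by rewrite upd_same.
  have hz' : infix (upd sg n (pw (sg z) M) z) w by us.
  apply/(IH n z n.+1 _ (ltnSn n) (ltn_trans hz (ltnSn n)) hu' hz').
  by us.
Qed.

Definition GPowM (v : nat) (p : word) (M n : nat) : formula :=
  FEx n (FAnd (GRep v n M n.+1) (GStar n p n.+1)).

Lemma GPowM_spec w v p M n sg : v < n -> prim p -> 0 < M -> infix (sg v) w ->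
  (sat w sg (GPowM v p M n) <-> exists q, sg v = pw p (M * q)).
Proof.
move=> hv hp hM hw; split.
- move=> [u [hu [H1 H2]]].
  have hu' : infix (upd sg n u n) w by rewrite upd_same.
  have hv' : infix (upd sg n u v) w by us.
  have := iffLR (GRep_spec M (ltn_trans hv (ltnSn n)) (ltnSn n) hv' hu') H1.
  have := iffLR (GStar_spec (ltnSn n) hp hu') H2.
  us => [[j ->]] ->; exists j; by rewrite pwM mulnC.
- move=> [q Eq]; exists (pw p q).
  have hu : infix (pw p q) w.
    apply: (infix_trans _ hw); rewrite Eq mulnC -pwM.
    by rewrite -(prednK hM) pwS; apply: prefix_infix.
  split => //.
  have hu' : infix (upd sg n (pw p q) n) w by rewrite upd_same.
  have hv' : infix (upd sg n (pw p q) v) w by us.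
  split.
  + apply/(GRep_spec M (ltn_trans hv (ltnSn n)) (ltnSn n) hv' hu').
    by us; rewrite Eq pwM mulnC.
  + apply/(GStar_spec (ltnSn n) hp hu'); us; by exists q.
Qed.

Definition in_cls (cl : nat * nat) (k : nat) : Prop :=
  if cl.2 == 0 then k = cl.1 else exists q, k = cl.1 + cl.2 * q.

Definition GCls (y : nat) (p : word) (cl : nat * nat) (n : nat) : formula :=
  if cl.2 == 0 then GW y (pw p cl.1) n
  else FEx n (FEx n.+1 (FAnd (FEq (V y) (V n) (V n.+1))
         (FAnd (GW n (pw p cl.1) n.+2) (GPowM n.+1 p cl.2 n.+2)))).

Lemma GCls_spec w y p cl n sg : y < n -> prim p -> infix (sg y) w ->
  (sat w sg (GCls y p cl n) <-> exists k, in_cls cl k /\ sg y = pw p k).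
Proof.
move=> hy hp hw; case: cl => r M; rewrite /GCls /in_cls /=.
case: eqP => hM.
  rewrite (GW_spec _ hy hw); split; [move=> ->; by exists r|by move=> [k [-> ->]]].
have hM' : 0 < M by case: M hM => //.
split.
- move=> [u [hu [t [ht [/sat_VVV [_ _ _ E1] [H1 H2]]]]]].
  have hu' : infix (upd (upd sg n u) n.+1 t n) w by us.
  have ht' : infix (upd (upd sg n u) n.+1 t n.+1) w by us.
  have := iffLR (GW_spec _ (ltn_trans (ltnSn n) (ltnSn n.+1)) hu') H1.
  have := iffLR (GPowM_spec (ltnSn n.+1) hp hM' ht') H2.
  move: E1; us => -> [q ->] ->; exists (r + M * q); split; first by exists q.
  by rewrite pwD.
- move=> [k [[q ->] Ey]].
  have hu : infix (pw p r) w.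
    by apply: (infix_trans _ hw); rewrite Ey pwD; apply: prefix_infix.
  have ht : infix (pw p (M * q)) w.
    by apply: (infix_trans _ hw); rewrite Ey pwD; apply: suffix_infix.
  exists (pw p r); split => //; exists (pw p (M * q)); split => //.
  have hu' : infix (upd (upd sg n (pw p r)) n.+1 (pw p (M * q)) n) w by us.
  have ht' : infix (upd (upd sg n (pw p r)) n.+1 (pw p (M * q)) n.+1) w by us.
  split; first by apply/sat_VVV; us; split => //; rewrite Ey pwD.
  split.
  + by apply/(GW_spec _ (ltn_trans (ltnSn n) (ltnSn n.+1)) hu'); us.
  + by apply/(GPowM_spec (ltnSn n.+1) hp hM' ht'); us; exists q.
Qed.

Fixpoint matchB (pcs : seq (word * (nat * nat))) (u t : word) : Prop :=
  match pcs with
  | [::] => u = t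
  | (p, cl) :: pcs' => exists k u', [/\ in_cls cl k, u = pw p k ++ u' & matchB pcs' u' t]
  end.

Fixpoint GBlocks (b : nat) (pcs : seq (word * (nat * nat))) (t : word) (n : nat) : formula :=
  match pcs with
  | [::] => GW b t n
  | (p, cl) :: pcs' => FEx n (FEx n.+1 (FAnd (FEq (V b) (V n) (V n.+1))
       (FAnd (GCls n p cl n.+2) (GBlocks n.+1 pcs' t n.+2))))
  end.

Lemma GBlocks_spec w t pcs : forall b n sg, b < n ->
  (forall pc, pc \in pcs -> prim pc.1) -> infix (sg b) w ->
  (sat w sg (GBlocks b pcs t n) <-> matchB pcs (sg b) t).
Proof.
elim: pcs => [|[p cl] pcs IH] b n sg hb hp hw /=; first exact: GW_spec.
have hp0 : prim p by apply: (hp (p, cl)); rewrite mem_head.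
have hps : forall pc, pc \in pcs -> prim pc.1.
  by move=> pc h; apply: hp; rewrite in_cons h orbT.
split.
- move=> [u [hu [t' [ht [/sat_VVV [_ _ _ E1] [H1 H2]]]]]].
  have hu' : infix (upd (upd sg n u) n.+1 t' n) w by us.
  have ht' : infix (upd (upd sg n u) n.+1 t' n.+1) w by us.
  have := iffLR (GCls_spec cl (ltn_trans (ltnSn n) (ltnSn n.+1)) hp0 hu') H1.
  have := iffLR (IH _ _ _ (ltnSn n.+1) hps ht') H2.
  move: E1; us => -> Hm [k [Hk ->]]; by exists k, t'.
- move=> [k [u' [Hk Eb Hm]]].
  have hu : infix (pw p k) w.
    by apply: (infix_trans _ hw); rewrite Eb; apply: prefix_infix.
  have ht : infix u' w.
    by apply: (infix_trans _ hw); rewrite Eb; apply: suffix_infix.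
  exists (pw p k); split => //; exists u'; split => //.
  have hu' : infix (upd (upd sg n (pw p k)) n.+1 u' n) w by us.
  have ht' : infix (upd (upd sg n (pw p k)) n.+1 u' n.+1) w by us.
  split; first by apply/sat_VVV; us; split => //.
  split.
  + by apply/(GCls_spec cl (ltn_trans (ltnSn n) (ltnSn n.+1)) hp0 hu'); us; exists k.
  + by apply/(IH _ _ _ (ltnSn n.+1) hps ht'); us.
Qed.

Definition GShape (x : nat) (sh : word * seq (word * (nat * nat)) * word) (n : nat) : formula :=
  FEx n (FEx n.+1 (FAnd (FEq (V x) (V n) (V n.+1))
     (FAnd (GW n sh.1.1 n.+2) (GBlocks n.+1 sh.1.2 sh.2 n.+2)))).

Definition matchS (u : word) (sh : word * seq (word * (nat * nat)) * word) :=
  exists m, u = sh.1.1 ++ m /\ matchB sh.1.2 m sh.2.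

Lemma GShape_spec w x sh n sg : x < n -> (forall pc, pc \in sh.1.2 -> prim pc.1) ->
  infix (sg x) w -> (sat w sg (GShape x sh n) <-> matchS (sg x) sh).
Proof.
move=> hx hp hw; split.
- move=> [u [hu [m [hm [/sat_VVV [_ _ _ E1] [H1 H2]]]]]].
  have hu' : infix (upd (upd sg n u) n.+1 m n) w by us.
  have hm' : infix (upd (upd sg n u) n.+1 m n.+1) w by us.
  have := iffLR (GW_spec _ (ltn_trans (ltnSn n) (ltnSn n.+1)) hu') H1.
  have := iffLR (GBlocks_spec sh.2 (ltnSn n.+1) hp hm') H2.
  move: E1; us => -> Hm ->; by exists m.
- move=> [m [Ex Hm]].
  have hu : infix sh.1.1 w.
    by apply: (infix_trans _ hw); rewrite Ex; apply: prefix_infix.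
  have hm : infix m w.
    by apply: (infix_trans _ hw); rewrite Ex; apply: suffix_infix.
  exists sh.1.1; split => //; exists m; split => //.
  have hu' : infix (upd (upd sg n sh.1.1) n.+1 m n) w by us.
  have hm' : infix (upd (upd sg n sh.1.1) n.+1 m n.+1) w by us.
  split; first by apply/sat_VVV; us; split => //.
  split.
  + by apply/(GW_spec _ (ltn_trans (ltnSn n) (ltnSn n.+1)) hu'); us.
  + by apply/(GBlocks_spec sh.2 (ltnSn n.+1) hp hm'); us.
Qed.

Definition GWhole (W n : nat) : formula :=
  FAll n (FEx n.+1 (FEx n.+2 (FEx n.+3 (FAnd (FEq (V n.+3) (V n.+1) (V n))
     (FEq (V W) (V n.+3) (V n.+2)))))).

Lemma GWhole_spec w W n sg : W < n -> infix (sg W) w ->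
  (sat w sg (GWhole W n) <-> sg W = w).
Proof.
move=> hW hw; split.
- move=> /(_ w (infix_refl w)) [u [_ [v [_ [t [_ [/sat_VVV [_ _ _ E1] /sat_VVV [_ _ _ E2]]]]]]]].
  move: E1 E2; us => E1 E2.
  have := size_infix hw; rewrite E2 E1 !size_cat => hs.
  move: hs; rewrite addnAC addnC -{2}(addn0 (size w)) leq_add2l leqn0 addn_eq0.
  rewrite !size_eq0 => /andP [/eqP hu /eqP hv].
  by rewrite hu hv cats0.
- move=> EW y /infixP [a [b Ew]].
  exists a; split; first by rewrite Ew; apply: prefix_infix.
  exists b; split; first by rewrite Ew catA; apply: suffix_infix.
  exists (a ++ y); split; first by rewrite Ew catA; apply: prefix_infix.
  split; apply/sat_VVV; us; split => //;
    try (rewrite ?Ew; solve [apply: prefix_infix|apply: suffix_infix|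
      rewrite catA; apply: prefix_infix|apply: infix_infix|apply: infix_refl|
      rewrite catA; apply: suffix_infix]).
  by rewrite EW Ew catA.
Qed.
End Gadgets.




Section FV.
Variable Sigma : finType.
Local Notation word := (word Sigma).
Local Notation formula := (formula Sigma).
Local Notation V n := (TVar Sigma n).
Local Notation E := (TEps Sigma).
Implicit Types (ys zs : seq nat) (pcs : seq (word * (nat * nat))) (sh : word * seq (word * (nat * nat)) * word).

Definition fvs (phi : formula) (ys : seq nat) := {subset fv phi <= ys}.

Lemma fvs_Ex n p ys : fvs p (n :: ys) -> fvs (FEx n p) ys.
Proof.
move=> h m /=; rewrite mem_filter => /andP [hm /h]; rewrite in_cons => /orP [/eqP E'|//].
by rewrite E' eqxx in hm.
Qed.
Lemma fvs_All n p ys : fvs p (n :: ys) -> fvs (FAll n p) ys.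
Proof. exact: fvs_Ex. Qed.
Lemma fvs_And p q ys : fvs p ys -> fvs q ys -> fvs (FAnd p q) ys.
Proof. by move=> h1 h2 m /=; rewrite mem_cat => /orP [/h1|/h2]. Qed.
Lemma fvs_Or p q ys : fvs p ys -> fvs q ys -> fvs (FOr p q) ys.
Proof. by move=> h1 h2 m /=; rewrite mem_cat => /orP [/h1|/h2]. Qed.
Lemma fvs_Not p ys : fvs p ys -> fvs (FNot p) ys.
Proof. by []. Qed.
Lemma fvs_mono p ys zs : fvs p ys -> {subset ys <= zs} -> fvs p zs.
Proof. by move=> h1 h2 m /h1 /h2. Qed.
Lemma fvs_Eq a b c ys :
  {subset term_fv a <= ys} -> {subset term_fv b <= ys} -> {subset term_fv c <= ys} ->
  fvs (FEq a b c) ys.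
Proof. by move=> h1 h2 h3 m /=; rewrite !mem_cat => /or3P [/h1|/h2|/h3]. Qed.
Lemma tfv_V n ys : n \in ys -> {subset term_fv (V n) <= ys}.
Proof. by move=> h m; rewrite /= mem_seq1 => /eqP ->. Qed.
Lemma tfv_E ys : {subset @term_fv Sigma E <= ys}. Proof. by []. Qed.
Lemma tfv_L (a : Sigma) ys : {subset term_fv (TLet a) <= ys}. Proof. by []. Qed.

Ltac mem := rewrite ?in_cons ?eqxx ?orbT //.
Ltac fvt := repeat first
  [ apply: fvs_Ex | apply: fvs_All | apply: fvs_And | apply: fvs_Or | apply: fvs_Not
  | apply: fvs_Eq | apply: tfv_E | apply: tfv_L | (apply: tfv_V; mem) ].

Ltac subs := apply/allP; by rewrite /= ?in_cons ?eqxx ?orbT.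

Lemma fvs_GW y c n : fvs (GW y c n) [:: y].
Proof.
elim: c y n => [|a c IH] y n /=; first by fvt.
fvt. eapply fvs_mono; first exact: (IH _ _). subs.
Qed.

Lemma fvs_GRep v z M n : fvs (@GRep Sigma v z M n) [:: v; z].
Proof.
elim: M v n => [|M IH] v n /=; first by fvt.
fvt; eapply fvs_mono; first exact: (IH _ _). subs.
Qed.

Ltac gad := eapply fvs_mono; [first [exact: fvs_GW|exact: fvs_GRep]|subs].

Lemma fvs_GStar z p n : fvs (GStar z p n) [:: z].
Proof. rewrite /GStar; fvt; gad. Qed.

Lemma fvs_GPowM v p M n : fvs (GPowM v p M n) [:: v].
Proof. rewrite /GPowM; fvt; gad. Qed.

Lemma fvs_GCls y p cl n : fvs (GCls y p cl n) [:: y].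
Proof. rewrite /GCls; case: ifP => _; first exact: fvs_GW. fvt; gad. Qed.

Lemma fvs_GBlocks b pcs t n : fvs (GBlocks b pcs t n) [:: b].
Proof.
elim: pcs b n => [|[p cl] pcs IH] b n /=; first exact: fvs_GW.
fvt.
- eapply fvs_mono; first exact: fvs_GCls. subs.
- eapply fvs_mono; first exact: (IH _ _). subs.
Qed.

Lemma fvs_GShape x sh n : fvs (GShape x sh n) [:: x].
Proof.
rewrite /GShape; fvt.
- gad.
- eapply fvs_mono; first exact: fvs_GBlocks. subs.
Qed.

Lemma fvs_GWhole W n : fvs (@GWhole Sigma W n) [:: W].
Proof. by rewrite /GWhole; fvt. Qed.

Lemma FC_GW y (c : word) n : is_FC (GW y c n).
Proof. by elim: c y n => //= a c IH y n; rewrite IH. Qed.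
Lemma FC_GStar z (p : word) n : is_FC (GStar z p n).
Proof. by rewrite /= FC_GW. Qed.
Lemma FC_GRep v z M n : is_FC (@GRep Sigma v z M n).
Proof. by elim: M v n => //= M IH v n; rewrite IH. Qed.
Lemma FC_GPowM v (p : word) M n : is_FC (GPowM v p M n).
Proof. by rewrite /= FC_GRep FC_GW. Qed.
Lemma FC_GCls y (p : word) cl n : is_FC (GCls y p cl n).
Proof. by rewrite /GCls; case: ifP => _ /=; rewrite ?FC_GW ?FC_GRep. Qed.
Lemma FC_GBlocks b pcs (t : word) n : is_FC (GBlocks b pcs t n).
Proof. by elim: pcs b n => [|[p cl] pcs IH] b n /=; rewrite ?FC_GW ?FC_GCls ?IH. Qed.
Lemma FC_GShape x sh n : is_FC (GShape x sh n).
Proof. by rewrite /= FC_GW FC_GBlocks. Qed.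
Lemma FC_GWhole W n : is_FC (@GWhole Sigma W n).
Proof. by []. Qed.
End FV.

Section Shapes.
Variable Sigma : finType.
Local Notation word := (word Sigma).
Local Notation formula := (formula Sigma).

Definition facs (p : word) : seq word :=
  [seq take l (drop i p) | i <- iota 0 (size p).+1, l <- iota 0 (size p).+1].

Definition FL (ps : seq word) : seq word := [::] :: flatten [seq facs p | p <- ps].

Lemma inF_FL ps s : inF ps s -> s \in FL ps.
Proof.
case=> [->|[p [a [b [hp E]]]]]; first exact: mem_head.
rewrite in_cons; apply/orP; right; apply/flatten_mapP; exists p => //.
have -> : s = take (size s) (drop (size a) p).
  by rewrite E drop_size_cat // take_size_cat.
apply: (allpairs_f (fun i l => take l (drop i p))); rewrite mem_iota /= E !size_cat; lia.
Qed.

Variables (N M : nat).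
Definition clsL : seq (nat * nat) :=
  [seq (k, 0) | k <- iota 0 N] ++ [seq (r, M) | r <- iota N M].
Definition classify (k : nat) : nat * nat :=
  if k < N then (k, 0) else (N + (k - N) %% M, M).

Hypothesis hM : 0 < M.

Lemma classify_in k : in_cls (classify k) k.
Proof.
rewrite /classify /in_cls; case: ltnP => hk /=; first by [].
have -> : (M == 0) = false by apply/eqP; lia.
exists ((k - N) %/ M).
have := divn_eq (k - N) M; lia.
Qed.

Lemma classify_mem k : classify k \in clsL.
Proof.
rewrite /classify /clsL mem_cat; case: ltnP => hk; apply/orP; [left|right];
  apply: map_f; rewrite mem_iota; first lia.
have := ltn_pmod (k - N) hM; lia.
Qed.

Fixpoint allv (ps : seq word) : seq (seq (word * (nat * nat))) :=
  match ps with
  | [::] => [:: [::]]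
  | p :: ps' => [seq (p, cl) :: v | cl <- clsL, v <- allv ps']
  end.

Fixpoint mkv (ps : seq word) (ks : seq nat) : seq (word * (nat * nat)) :=
  match ps, ks with
  | p :: ps', k :: ks' => (p, classify k) :: mkv ps' ks'
  | _, _ => [::]
  end.

Lemma mkv_allv ps : forall ks, size ks = size ps -> mkv ps ks \in allv ps.
Proof.
elim: ps => [|p ps IH] [|k ks] //= [hs].
by apply: (allpairs_f (fun cl v => (p, cl) :: v)); [apply: classify_mem|apply: IH].
Qed.

Lemma mkv_match ps : forall ks t, size ks = size ps ->
  matchB (mkv ps ks) (blocksK ps ks ++ t) t.
Proof.
elim: ps => [|p ps IH] [|k ks] t //= [hs].
exists k, (blocksK ps ks ++ t); split; [exact: classify_in|by rewrite catA|exact: IH].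
Qed.

Lemma allv_mem ps : forall v, v \in allv ps -> forall pc, pc \in v -> pc.1 \in ps /\ pc.2 \in clsL.
Proof.
elim: ps => [|p ps IH] v /=; first by rewrite mem_seq1 => /eqP -> pc.
move=> /allpairsP [[cl v'] [/= hcl hv' ->]] pc; rewrite in_cons => /orP [/eqP -> //|hpc].
  by rewrite mem_head.
by have [h1 h2] := IH _ hv' _ hpc; rewrite in_cons h1 orbT.
Qed.

Definition repv (v : seq (word * (nat * nat))) : word :=
  flatten [seq pw pc.1 pc.2.1 | pc <- v].

Lemma K0 K (R : recog K) v : forall m t,
  (forall pc, pc \in v -> forall k, in_cls pc.2 k -> rh R (pw pc.1 k) = rh R (pw pc.1 pc.2.1)) ->
  matchB v m t -> rh R m = rh R (repv v ++ t).
Proof.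
elim: v => [|[p cl] v IH] m t hv /=; first by move=> ->.
move=> [k [u' [hk -> Hm]]].
rewrite (rhcat R (pw p k) u') (hv (p, cl) (mem_head _ _) k hk) (IH u' t) //.
  by rewrite -(rhcat R) /repv /= catA.
by move=> pc hpc; apply: hv; rewrite in_cons hpc orbT.
Qed.
End Shapes.

Section RegFC.
Variable Sigma : finType.
Local Notation word := (word Sigma).
Local Notation formula := (formula Sigma).
Local Notation V n := (TVar Sigma n).
Local Notation EE := (TEps Sigma).
Local Notation shape := (word * seq (word * (nat * nat)) * word)%type.

Lemma disj_shapes (x : nat) (Good : shape -> Prop) (l : seq shape) :
  (forall sh, sh \in l -> forall pc, pc \in sh.1.2 -> prim pc.1) ->
  exists phi : formula, [/\ is_FC phi, fvs phi [:: x] &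
    forall w sg, infix (sg x) w ->
      (sat w sg phi <-> exists sh, [/\ sh \in l, Good sh & matchS (sg x) sh])].
Proof.
elim: l => [|sh l IH] hl.
  exists (FNot (FEq EE EE EE)); split => // w sg hw; split.
  - by move=> h; exfalso; apply: h; apply: sat_True.
  - by move=> [sh []].
have [phi [hFC hfv hsat]] : exists phi : formula, [/\ is_FC phi, fvs phi [:: x] &
    forall w sg, infix (sg x) w ->
      (sat w sg phi <-> exists sh, [/\ sh \in l, Good sh & matchS (sg x) sh])].
  by apply: IH => sh' hsh'; apply: hl; rewrite in_cons hsh' orbT.
have hp : forall pc, pc \in sh.1.2 -> prim pc.1 by apply: hl; rewrite mem_head.
case: (classic (Good sh)) => hG.
- exists (FOr (GShape x sh x.+1) phi); split.
  + by apply/andP; split; [apply: FC_GShape|].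
  + by apply: fvs_Or => //; apply: fvs_GShape.
  + move=> w sg hw; split.
    * case=> [/(GShape_spec (ltnSn x) hp hw) hm|/(hsat _ _ hw) [sh' [h1 h2 h3]]].
        by exists sh; rewrite mem_head.
      by exists sh'; rewrite in_cons h1 orbT.
    * move=> [sh' []]; rewrite in_cons => /orP [/eqP -> _ hm|h1 h2 h3].
        by left; apply/(GShape_spec (ltnSn x) hp hw).
      by right; apply/(hsat _ _ hw); exists sh'.
- exists phi; split => // w sg hw; rewrite (hsat _ _ hw); split.
  + by move=> [sh' [h1 h2 h3]]; exists sh'; rewrite in_cons h1 orbT.
  + move=> [sh' []]; rewrite in_cons => /orP [/eqP -> //|h1 h2 h3].
    by exists sh'.
Qed.

Lemma reg_FC (ps : seq word) (hps : forall p, p \in ps -> prim p) (g : regex Sigma) (x : nat) :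
  exists psi : formula, [/\ is_FC psi, fvs psi [:: x] &
    forall w sg, in_star_prod ps w -> (sat w sg psi <-> sat w sg (FReg x g))].
Proof.
have R := regex_recog g.
have [N [M [hM Hper]]] := period_list R ps.
pose shapes : seq shape :=
  [seq (sv, t) | sv <- [seq (s, v) | s <- FL ps, v <- allv N M ps], t <- FL ps].
pose Good (sh : shape) := re_lang g (sh.1.1 ++ repv sh.1.2 ++ sh.2).
have hsh : forall sh, sh \in shapes -> sh.1.2 \in allv N M ps.
  move=> sh; rewrite /shapes => /allpairsP [[sv t] [hsv _ ->]].
  move: hsv => /allpairsP [[s v] [_ hv Esv]].
  by move: Esv => /= ->.
have hval : forall v, v \in allv N M ps -> forall pc, pc \in v -> forall k,
    in_cls pc.2 k -> rh R (pw pc.1 k) = rh R (pw pc.1 pc.2.1).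
  move=> v hv pc hpc k; have [h1] := allv_mem hv hpc.
  rewrite /clsL mem_cat => /orP [/mapP [k0 _ ->]|/mapP [r hr ->]].
    by rewrite /in_cls /= => ->.
  rewrite /in_cls /=; have -> : (M == 0) = false by apply/eqP; lia.
  move=> [q ->]; apply: Hper => //; move: hr; rewrite mem_iota; lia.
have [phi [hFC hfv hsat]] := disj_shapes x Good
  (l := shapes) (fun sh hs pc hpc => hps _ (proj1 (allv_mem (hsh _ hs) hpc))).
exists (FAnd (FEq (V x) (V x) EE) phi); split.
- by apply/andP; split.
- apply: fvs_And => //; apply: fvs_Eq; [apply: tfv_V; exact: mem_head|apply: tfv_V; exact: mem_head|apply: tfv_E].
- move=> w sg hw; split.
  + move=> [/sat_VVE hi /(hsat _ _ hi) [[[s v] t] [hs hG [m [Ex Hm]]]]].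
    split => //; apply/(racc_ok R); move/(racc_ok R): hG.
    have hv := hsh _ hs.
    by rewrite /= Ex (rhcat R s m) (K0 (hval _ hv) Hm) -(rhcat R).
  + move=> [hi hg]; split; first exact/sat_VVE.
    apply/(hsat _ _ hi).
    have [a [b Ew]] := iffLR (infix_ex _ _) hi.
    have [s [t [ks [hs [ht [hk Ex]]]]]] := Fac hw Ew.
    exists ((s, mkv N M ps ks), t); split.
    * apply: (allpairs_f (fun sv t => (sv, t))); last exact: inF_FL.
      apply: (allpairs_f (fun s v => (s, v))); first exact: inF_FL.
      by have := @mkv_allv _ N M hM ps ks hk.
    * rewrite /Good /=; apply/(racc_ok R); move/(racc_ok R): hg.
      have Hm := @mkv_match _ N M hM ps ks t hk.
      by rewrite Ex (rhcat R s (blocksK ps ks ++ t)) (K0 (hval _ (@mkv_allv _ N M hM ps ks hk)) Hm) -(rhcat R).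
    * by exists (blocksK ps ks ++ t); split => //; apply: (@mkv_match _ N M hM ps ks t hk).
Qed.
End RegFC.


Section Main.
Variable Sigma : finType.
Local Notation word := (word Sigma).
Local Notation formula := (formula Sigma).

Lemma fvs_refl (phi : formula) : fvs phi (fv phi).
Proof. by []. Qed.

Lemma trans_FC (ps : seq word) (hps : forall p, p \in ps -> prim p) (phi : formula) :
  exists phi' : formula, [/\ is_FC phi', fvs phi' (fv phi) &
    forall w sg, in_star_prod ps w -> (sat w sg phi' <-> sat w sg phi)].
Proof.
elim: phi.
- by move=> a b c; exists (FEq a b c); split.
- move=> x g; have [psi [h1 h2 h3]] := reg_FC hps g x.
  by exists psi; split.
- move=> p [p' [h1 h2 h3]]; exists (FNot p'); split => // w sg hw /=.
  by rewrite (h3 _ _ hw).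
- move=> p [p' [h1 h2 h3]] q [q' [g1 g2 g3]]; exists (FAnd p' q'); split.
  + by rewrite /= h1 g1.
  + move=> m /=; rewrite !mem_cat => /orP [/h2 ->|/g2 ->] //; by rewrite orbT.
  + by move=> w sg hw /=; rewrite (h3 _ _ hw) (g3 _ _ hw).
- move=> p [p' [h1 h2 h3]] q [q' [g1 g2 g3]]; exists (FOr p' q'); split.
  + by rewrite /= h1 g1.
  + move=> m /=; rewrite !mem_cat => /orP [/h2 ->|/g2 ->] //; by rewrite orbT.
  + by move=> w sg hw /=; rewrite (h3 _ _ hw) (g3 _ _ hw).
- move=> n p [p' [h1 h2 h3]]; exists (FEx n p'); split => //.
  + by move=> m /=; rewrite !mem_filter => /andP [-> /h2].
  + move=> w sg hw /=; split => [[u [hu H]]|[u [hu H]]]; exists u; split => //.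
    * by rewrite -(h3 _ _ hw).
    * by rewrite (h3 _ _ hw).
- move=> n p [p' [h1 h2 h3]]; exists (FAll n p'); split => //.
  + by move=> m /=; rewrite !mem_filter => /andP [-> /h2].
  + move=> w sg hw /=; split => H u hu.
    * by rewrite -(h3 _ _ hw); apply: H.
    * by rewrite (h3 _ _ hw); apply: H.
Qed.

Definition theta (ps : seq word) : formula :=
  FEx 0 (FAnd (GWhole Sigma 0 1) (GBlocks 0 [seq (p, (0, 1)) | p <- ps] [::] 1)).

Lemma matchB_isp (ps : seq word) (u : word) : matchB [seq (p, (0, 1)) | p <- ps] u [::] <-> in_star_prod ps u.
Proof.
elim: ps u => [|p ps IH] u //=.
split.
- by move=> [k [u' [_ -> /IH H]]]; exists k, u'.
- move=> [k [v [-> /IH H]]]; exists k, v; split => //.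
  by rewrite /in_cls /=; exists k; rewrite mul1n.
Qed.

Lemma theta_spec (ps : seq word) (hps : forall p, p \in ps -> prim p) w sg :
  sat w sg (theta ps) <-> in_star_prod ps w.
Proof.
have hp : forall pc, pc \in [seq (p, (0, 1)) | p <- ps] -> prim pc.1.
  by move=> pc /mapP [p hp' ->]; apply: hps.
split.
- move=> [u [hu [H1 H2]]].
  have hu' : infix (upd sg 0 u 0) w by rewrite upd_same.
  have := iffLR (GWhole_spec (ltnSn 0) hu') H1; rewrite upd_same => Eu.
  have := iffLR (GBlocks_spec [::] (ltnSn 0) hp hu') H2.
  by rewrite upd_same Eu => /matchB_isp.
- move=> H; exists w; split; first exact: infix_refl.
  have hu' : infix (upd sg 0 w 0) w by rewrite upd_same; apply: infix_refl.
  split.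
  + by apply/(GWhole_spec (ltnSn 0) hu'); rewrite upd_same.
  + by apply/(GBlocks_spec [::] (ltnSn 0) hp hu'); rewrite upd_same; apply/matchB_isp.
Qed.

Lemma theta_FC (ps : seq word) : is_FC (theta ps).
Proof. by rewrite /theta /= FC_GBlocks. Qed.

Lemma theta_fvs (ps : seq word) : fvs (theta ps) [::].
Proof.
apply: fvs_Ex; apply: fvs_And; first exact: fvs_GWhole.
exact: fvs_GBlocks.
Qed.

Lemma fvs_sentence (phi : formula) : fvs phi [::] -> sentence phi.
Proof.
move=> h; rewrite /sentence; case Ef: (fv phi) => [|m s] //.
by have := h m; rewrite Ef mem_head => /(_ isT).
Qed.

Lemma isp_nil (ws : seq word) : @in_star_prod Sigma ws [::].
Proof. by elim: ws => //= p ws IH; exists 0, [::]. Qed.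

Lemma isp_cat (ws1 ws2 : seq word) (u v : word) : in_star_prod ws1 u -> in_star_prod ws2 v ->
  in_star_prod (ws1 ++ ws2) (u ++ v).
Proof.
elim: ws1 u => [|p ws IH] u /=; first by move=> ->.
move=> [k [u' [-> H]]] Hv; exists k, (u' ++ v); split; first by rewrite catA.
exact: IH.
Qed.

Lemma roots (ws : seq word) : exists ps, (forall p, p \in ps -> prim p) /\
  forall w, in_star_prod ws w -> in_star_prod ps w.
Proof.
elim: ws => [|v ws [ps [hps H]]]; first by exists [::].
case: (eqVneq v [::]) => [->|hv].
  exists ps; split => // w /= [k [u [-> /H]]]; by rewrite -/(pw [::] k) pw_nil.
have hv' : v <> [::] by move=> hh; rewrite hh eqxx in hv.
have [q [j [hq Ev]]] := prim_root hv'.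
exists (q :: ps); split.
  by move=> p; rewrite in_cons => /orP [/eqP ->|/hps].
move=> w /= [k [u [-> /H Hu]]]; exists (j * k), u; split => //.
by rewrite -/(pw v k) -/(pw q (j * k)) Ev pwM.
Qed.

Lemma bcb_cases (L : language Sigma) : bool_comb_bounded L ->
  bounded L \/ bounded (fun w => ~ L w).
Proof.
elim => {L}.
- by move=> L h; left.
- move=> L _ [[ws h]|h]; [right|by left].
  by exists ws => w /NNPP /h.
- move=> L1 L2 _ [[w1 h1]|[w1 h1]] _ [[w2 h2]|[w2 h2]].
  + left; exists (w1 ++ w2) => w [/h1 H|/h2 H].
      by rewrite -[w]cats0; apply: isp_cat => //; apply: isp_nil.
    by rewrite -[w]cat0s; apply: isp_cat => //; apply: isp_nil.
  + by right; exists w2 => w H; apply: h2 => ?; apply: H; right.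
  + by right; exists w1 => w H; apply: h1 => ?; apply: H; left.
  + by right; exists w1 => w H; apply: h1 => ?; apply: H; left.
- move=> L1 L2 _ [[w1 h1]|[w1 h1]] _ [[w2 h2]|[w2 h2]].
  + by left; exists w1 => w [/h1].
  + by left; exists w1 => w [/h1].
  + by left; exists w2 => w [_ /h2].
  + right; exists (w1 ++ w2) => w H.
    case: (classic (L1 w)) => H1.
    * have H2 : ~ L2 w by move=> H2; apply: H.
      by rewrite -[w]cat0s; apply: isp_cat; [apply: isp_nil|apply: h2].
    * by rewrite -[w]cats0; apply: isp_cat; [apply: h1|apply: isp_nil].
Qed.

Lemma bounded_FC (L : language Sigma) : bounded L -> FCREG_definable L -> FC_definable L.
Proof.
move=> [ws hws] [phi [hs hL]].
have [ps [hps Hps]] := roots ws.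
have [phi' [hFC hfv hsat]] := trans_FC hps phi.
exists (FAnd (theta ps) phi'); split.
- apply: fvs_sentence; apply: fvs_And; first exact: theta_fvs.
  by move: hfv; rewrite /fvs hs.
- by apply/andP; split; [apply: theta_FC|].
- move=> w; rewrite /models /=; split.
  + move=> Lw; have hw := Hps _ (hws _ Lw).
    by split; [apply/theta_spec|apply/(hsat _ _ hw)/hL].
  + move=> [/(theta_spec hps) hw H]; apply/hL; exact/(hsat _ _ hw).
Qed.
End Main.

Theorem lemma5p3 (Sigma : finType) (L : language Sigma) :
  bool_comb_bounded L -> (FC_definable L <-> FCREG_definable L).
Proof.
move=> hb; split.
- by move=> [phi [h1 _ h3]]; exists phi.
- move=> hL; case: (bcb_cases hb) => hB; first exact: bounded_FC.
  have : FCREG_definable (fun w => ~ L w).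
    move: hL => [phi [h1 h2]]; exists (FNot phi); split => // w.
    by rewrite /models /= -/(models w phi) -h2.
  move=> /(bounded_FC hB) [psi [h1 h2 h3]].
  exists (FNot psi); split => // w; rewrite /models /= -/(models w psi) -h3.
  by split => [H /(_ H)|/NNPP].
Qed.
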